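(* For each event $k$, let $\mathcal{P}^{\Theta}_k\subseteq\mathcal{P}$ be a set of accumulators (a ''bounding box'') containing $\operatorname{round}(W(\mathbf{x}_k,t_k;\boldsymbol{\theta}))$ for every $\boldsymbol{\theta}\in\Theta$. Assume the nesting property: for all $\boldsymbol{\theta}\in\Theta$ and all $1\le i<j$, if $\operatorname{round}(W(\mathbf{x}_i,t_i;\boldsymbol{\theta}))=\operatorname{round}(W(\mathbf{x}_j,t_j;\boldsymbol{\theta}))$ then $\mathcal{P}^{\Theta}_i\subseteq\mathcal{P}^{\Theta}_j$. Define recursively the upper-bound IWE $\overline{I}^n:\mathcal{P}\to\mathbb{Z}_{\ge0}$ and numbers $Q^{n}$, $\overline{L_n}$ by $\overline{I}^0\equiv 0$, $\overline{L_0}=0$, and for $n\ge 0$: $$Q^{n}=\max_{\mathbf{p}\in\mathcal{P}^{\Theta}_{n+1}}\overline{I}^{n}(\mathbf{p}),\qquad \overline{L_{n+1}}=\overline{L_n}+1+2Q^{n},$$ and $\overline{I}^{n+1}$ is obtained from $\overline{I}^{n}$ by adding $1$ at one accumulator $\boldsymbol{\nu}_{n+1}\in\mathcal{P}^{\Theta}_{n+1}$ attaining the maximum $Q^{n}$. Then for every $N\ge 0$ and every $\boldsymbol{\theta}\in\Theta$ one has $Q^{N}\ge I^{N}\big(\operatorname{round}(W(\mathbf{x}_{N+1},t_{N+1};\boldsymbol{\theta}));\boldsymbol{\theta}\big)$ (when event $N+1$ exists) and $$L^{\mathrm{SoS}}_{N}(\boldsymbol{\theta})\le\overline{L_N};\quad\text{in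 particular}\quad \max_{\boldsymbol{\theta}\in\Theta}L^{\mathrm{SoS}}_N(\boldsymbol{\theta})\le\overline{L_N}.$$
   Context: Events: a finite sequence $e_k=(\mathbf{x}_k,t_k)$, $k=1,2,\dots$, with $\mathbf{x}_k\in\mathbb{R}^2$ and timestamps $t_1\le t_2\le\cdots$. A warping function $W(\mathbf{x},t;\boldsymbol{\theta})\in\mathbb{R}^2$ depends on a parameter $\boldsymbol{\theta}$ ranging over a set $\Theta$ (the search space). The accumulators form a finite set $\mathcal{P}\subset\mathbb{Z}^2$ of lattice points; it is assumed that for every event $k$ and every $\boldsymbol\theta\in\Theta$, no coordinate of $W(\mathbf{x}_k,t_k;\boldsymbol{\theta})$ has fractional part exactly $1/2$ and the nearest lattice point $\operatorname{round}(W(\mathbf{x}_k,t_k;\boldsymbol{\theta}))$ lies in $\mathcal{P}$. The indicator $\mathbf{1}(\mathbf{p}-\mathbf{x}')$ equals $1$ if both coordinates of $\mathbf{p}-\mathbf{x}'$ have absolute value $<1/2$ and $0$ otherwise. The image of warped events (IWE) built from the first $N$ events is $I^N(\mathbf{p};\boldsymbol{\theta})=\sum_{k=1}^N\mathbf{1}(\mathbf{p}-W(\mathbf{x}_k,t_k;\boldsymbol{\theta}))$ for $\mathbf p\in\mathcal P$ (so $I^0\equiv 0$). The sum-of-squares contrast over the first $N$ events is $L^{\mathrm{SoS}}_N(\boldsymbol{\theta})=\sum_{\mathbf{p}\in\mathcal{P}}I^N(\mathbf{p};\boldsymbol{\theta})^2$. *)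

(* Defs.v *)
(* Reals: an arbitrary archimedean real field R (Stdlib's R
   and every realType are instances), so that Num.floor is available. *)
From HB Require Import structures.
From mathcomp Require Import all_boot all_order all_algebra.
Set Implicit Arguments. Unset Strict Implicit. Unset Printing Implicit Defensive.
Import Order.TTheory GRing.Theory Num.Theory.
Local Open Scope ring_scope.

Section Defs.
Variable R : archiRealFieldType.

Definition lat := (int * int)%type.

Definition half_frac (r : R) : Prop := exists z : int, r = z%:~R + 2^-1.

(* nearest integer of r (meaningful when r is not half-integral) *)
Definition round1 (r : R) : int := Num.floor (r + 2^-1).
Definition round2 (w : R * R) : lat := (round1 w.1, round1 w.2).

Definition ind (p : lat) (w : R * R) : nat :=
  ((`|p.1%:~R - w.1| < 2^-1) && (`|p.2%:~R - w.2| < 2^-1))%R.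

Variables (Theta : Type) (W : R * R -> R -> Theta -> R * R)
          (x : nat -> R * R) (t : nat -> R).

Definition warped (k : nat) (th : Theta) : R * R := W (x k) (t k) th.

Definition IWE (N : nat) (p : lat) (th : Theta) : nat :=
  (\sum_(1 <= k < N.+1) ind p (warped k th))%N.

Definition LSoS (P : seq lat) (N : nat) (th : Theta) : nat :=
  (\sum_(p <- P) (IWE N p th) ^ 2)%N.
End Defs.

Fixpoint Ibar (nu : nat -> lat) (n : nat) (p : lat) : nat :=
  match n with
  | 0 => 0
  | n'.+1 => (Ibar nu n' p + (p == nu n'.+1))%N
  end.

Definition Qn (B : nat -> seq lat) (nu : nat -> lat) (n : nat) : nat :=
  (\max_(p <- B n.+1) Ibar nu n p)%N.

Fixpoint Lbar (B : nat -> seq lat) (nu : nat -> lat) (n : nat) : nat :=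
  match n with
  | 0 => 0
  | n'.+1 => (Lbar B nu n' + 1 + 2 * Qn B nu n')%N
  end.

(* Main.v *)
Require Import Defs.
From HB Require Import structures.
From mathcomp Require Import all_boot all_order all_algebra.
From mathcomp Require Import lra ring.
Import Order.TTheory GRing.Theory Num.Theory.
Local Open Scope ring_scope.

Lemma ind1 (R : archiRealFieldType) (z : int) (r : R) : ~ half_frac r ->
  (`|z%:~R - r| < 2^-1) = (z == round1 r).
Proof.
move=> hf; rewrite /round1 eq_sym floor_eq ltr_distl intrD rmorph1.
have h2 : (2^-1 : R) * 2 = 1 by rewrite mulVf // pnatr_eq0.
set h := (2^-1 : R) in h2 *.
apply/idP/idP => /andP[a b]; apply/andP; split; try lra.
have : (z%:~R : R) != r + h.
  apply/eqP => E; apply: hf; exists (z - 1); rewrite intrD rmorphN rmorph1 E; lra.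
move=> ne; have : (z%:~R : R) < r + h by rewrite lt_neqAle ne.
lra.
Qed.
Lemma indE (R : archiRealFieldType) (p : lat) (w : R * R) :
  ~ half_frac w.1 -> ~ half_frac w.2 -> ind p w = (p == round2 w) :> nat.
Proof.
case: p => a b h1 h2; rewrite /ind /round2 /= !ind1 //.
Qed.

Theorem theorem2
  (R : archiRealFieldType) (Theta : Type) (inTheta : Theta -> Prop)
  (W : R * R -> R -> Theta -> R * R)
  (M : nat) (x : nat -> R * R) (t : nat -> R)
  (P : seq lat) (B : nat -> seq lat) (nu : nat -> lat) :
  (forall i j, (1 <= i)%N -> (i <= j)%N -> (j <= M)%N -> t i <= t j) ->
  uniq P ->
  (forall k th, (1 <= k <= M)%N -> inTheta th ->
     ~ half_frac (warped W x t k th).1 /\ ~ half_frac (warped W x t k th).2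
     /\ round2 (warped W x t k th) \in P) ->
  (forall k, (1 <= k <= M)%N -> {subset B k <= P}) ->
  (forall k th, (1 <= k <= M)%N -> inTheta th ->
     round2 (warped W x t k th) \in B k) ->
  (forall th i j, inTheta th -> (1 <= i)%N -> (i < j)%N -> (j <= M)%N ->
     round2 (warped W x t i th) = round2 (warped W x t j th) ->
     {subset B i <= B j}) ->
  (forall n, (n < M)%N -> nu n.+1 \in B n.+1 /\ Ibar nu n (nu n.+1) = Qn B nu n) ->
  forall N th, (N <= M)%N -> inTheta th ->
    ((N < M)%N -> (IWE W x t N (round2 (warped W x t N.+1 th)) th <= Qn B nu N)%N)
    /\ (LSoS W x t P N th <= Lbar B nu N)%N.
Proof.
move=> _ uP hW _ hB hnest hnu N th NM hth.
set w := fun k => round2 (warped W x t k th).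
have IS : forall n p, (n < M)%N ->
    IWE W x t n.+1 p th = (IWE W x t n p th + (p == w n.+1))%N.
  move=> n p nM; rewrite /IWE big_nat_recr //=.
  have [h1 [h2 _]] := hW n.+1 th nM hth.
  by rewrite indE.
have I0 : forall p, IWE W x t 0 p th = 0%N.
  by move=> p; rewrite /IWE big_geq.
have claim : forall n, (n <= M)%N -> forall j, (n < j <= M)%N ->
    (IWE W x t n (w j) th <= \max_(q <- B j) Ibar nu n q)%N.
  elim=> [|n IH] nM j /andP[nj jM]; first by rewrite I0.
  rewrite IS //; case: eqP => E /=.
  - have [nuB nuQ] := hnu n nM.
    have sub : {subset B n.+1 <= B j}.
      by apply: (hnest th) => //; rewrite -/(w _) -/(w _) E.
    apply: (bigmaxn_sup_seq (nu n.+1)) => //; first exact: sub.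
    rewrite /= eqxx nuQ leq_add2r E.
    by apply: IH; [exact: ltnW | rewrite leqnn].
  - rewrite addn0; apply: leq_trans (IH (ltnW nM) j _) _.
      by rewrite jM andbT ltnW.
    apply/bigmax_leqP_seq => q qB _.
    apply: (bigmaxn_sup_seq q) => //=; exact: leq_addr.
split.
  by move=> NM'; apply: claim => //; rewrite NM' ltnSn.
elim: N NM => [|N IH] NM.
  by rewrite /LSoS big1_seq // => p _; rewrite I0.
rewrite /LSoS.
have NM' : (N < M)%N by [].
have sq : forall a (b : bool), ((a + b) ^ 2 = a ^ 2 + b * (2 * a + 1))%N.
  by move=> a [] /=; rewrite ?addn0 ?mul0n ?mul1n ?addn0 //; ring.
under eq_bigr => p _ do rewrite IS // sq.
rewrite big_split /=.
have [_ [_ p0P]] := hW N.+1 th NM hth.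
have -> : (\sum_(i <- P) (i == w N.+1) * (2 * IWE W x t N i th + 1))%N
    = (2 * IWE W x t N (w N.+1) th + 1)%N.
  rewrite (bigD1_seq (w N.+1) p0P uP) eqxx mul1n big1; first exact: addn0.
  by move=> i /negPf ->.
rewrite -addnA; apply: (leq_add (IH (ltnW NM))).
rewrite addnC leq_add2l leq_mul2l.
apply/orP; right; rewrite /Qn.
by apply: (claim N (ltnW NM) N.+1); rewrite ltnSn NM.
Qed.
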